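(* Let $G$ be a finite group. Then $G$ is nested if and only if $K(G/N)>1$ for every proper normal subgroup $N$ of $G$.
   Context: All groups are finite. For $\chi\in\mathrm{Irr}(G)$, the center of $\chi$ is $Z(\chi)=\{g\in G : |\chi(g)|=\chi(1)\}$; equivalently $Z(\chi)/\ker(\chi)=Z(G/\ker(\chi))$. A group $G$ is nested if for all $\chi,\psi\in\mathrm{Irr}(G)$ either $Z(\chi)\le Z(\psi)$ or $Z(\psi)\le Z(\chi)$. For a nonabelian group $H$, let $\mathcal{X}_H=\{\chi\in\mathrm{Irr}(H) : Z(\chi)>Z(H)\}$ (strict containment) and define $K(H)=\bigcap_{\chi\in\mathcal{X}_H}\ker(\chi)$; if $H$ is abelian, set $K(H)=H$. Here $K(G/N)$ is this subgroup computed in the group $H=G/N$. *)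

(* Defs.v *)
From HB Require Import structures.
From mathcomp Require Import all_boot all_order all_algebra all_fingroup all_solvable all_field all_character.
Set Implicit Arguments. Unset Strict Implicit. Unset Printing Implicit Defensive.
Import GRing.Theory Num.Theory.

Local Open Scope group_scope.

Definition nested (gT : finGroupType) (G : {group gT}) : Prop :=
  forall i j : Iirr G,
    ('Z(('chi[G]_i)%R)%CF \subset 'Z(('chi[G]_j)%R)%CF) || ('Z(('chi[G]_j)%R)%CF \subset 'Z(('chi[G]_i)%R)%CF).

(* The outer
   intersection with H only fixes the empty-intersection convention. *)
Definition Ksub (rT : finGroupType) (H : {group rT}) : {set rT} :=
  if abelian H then H
  else H :&: \bigcap_(i : Iirr H | 'Z(H) \proper 'Z(('chi[H]_i)%R)%CF) cfker ('chi[H]_i)%R.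

(* Main.v *)
Require Import Defs.
From mathcomp Require Import all_boot all_order all_algebra all_fingroup all_solvable all_field all_character.
Set Implicit Arguments. Unset Strict Implicit. Unset Printing Implicit Defensive.
Import GRing.Theory Num.Theory.
Local Open Scope group_scope.

Lemma zmodE (gT : finGroupType) (G N : {group gT}) (i : Iirr (G / N)) x :
  N <| G -> x \in G ->
  (x \in 'Z(('chi_(mod_Iirr i))%R)%CF) = (coset N x \in 'Z(('chi[G / N]_i)%R)%CF).
Proof.
move=> nsNG Gx.
by rewrite !irr_cfcenterE ?mem_quotient // mod_IirrE // cfModE // cfMod1.
Qed.

Lemma subZmod (gT : finGroupType) (G N : {group gT}) (i j : Iirr (G / N)) :
  N <| G ->
  ('Z(('chi_(mod_Iirr i))%R)%CF \subset 'Z(('chi_(mod_Iirr j))%R)%CF)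
  = ('Z(('chi[G / N]_i)%R)%CF \subset 'Z(('chi[G / N]_j)%R)%CF).
Proof.
move=> nsNG; apply/subsetP/subsetP => h y.
  move=> Zy; have := subsetP (cfcenter_sub _) _ Zy.
  case/morphimP=> x _ Gx Ey; rewrite Ey in Zy *.
  by rewrite -zmodE //; apply: h; rewrite zmodE.
move=> Zy; have Gy := subsetP (cfcenter_sub _) _ Zy.
by rewrite zmodE //; apply: h; rewrite -zmodE.
Qed.

Lemma comm_center_ker (rT : finGroupType) (H : {group rT}) (j : Iirr H) :
  [~: 'Z(('chi_j)%R)%CF, H] \subset cfker ('chi[H]_j)%R.
Proof.
have nKH := normal_norm (cfker_normal ('chi[H]_j)%R).
rewrite -quotient_cents2 ?(subset_trans (cfcenter_sub _)) //.
apply: subset_trans (cfcenter_subset_center _) _.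
exact: subsetIr.
Qed.
Theorem theoremD (gT : finGroupType) (G : {group gT}) :
  nested G <->
  (forall N : {group gT}, N <| G -> N \proper G ->
     Ksub (G / N)%G != 1%g).
Proof.
split.
- move=> nest N nsNG ltNG.
  have nestH : forall i j : Iirr (G / N),
      ('Z(('chi_i)%R)%CF \subset 'Z(('chi_j)%R)%CF)
      || ('Z(('chi_j)%R)%CF \subset 'Z(('chi_i)%R)%CF).
    by move=> i j; rewrite -!(subZmod _ _ nsNG); apply: nest.
  have ntH : (G / N) != 1.
    rewrite -subG1 quotient_sub1 ?normal_norm //.
    by case/andP: ltNG.
  rewrite /Ksub; case: ifP => [_|nabH]; first exact: ntH.
  case: (pickP [pred i : Iirr (G / N) | 'Z(G / N) \proper 'Z(('chi_i)%R)%CF])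
    => [i0 Pi0 | noP]; last first.
    apply: contraNneq ntH => Kt; apply/eqP/trivgP; rewrite -Kt subsetI subxx /=.
    by apply/bigcapsP => k Pk; have := noP k; rewrite /= Pk.
  have [i1 Pi1 min1] := arg_minnP (fun i : Iirr (G / N) => #|'Z(('chi_i)%R)%CF|) Pi0.
  have sub1 : forall j : Iirr (G / N), 'Z(G / N) \proper 'Z(('chi_j)%R)%CF ->
      'Z(('chi_i1)%R)%CF \subset 'Z(('chi_j)%R)%CF.
    move=> j Pj; case/orP: (nestH i1 j) => // sji.
    have E : 'Z(('chi_j)%R)%CF == 'Z(('chi_i1)%R)%CF.
      by rewrite eqEcard sji min1.
    by rewrite -(eqP E).
  apply/negP => /eqP Kt.
  have comm1 : [~: 'Z(('chi_i1)%R)%CF, G / N] \subset [1].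
    rewrite -Kt subsetI commg_subr (subset_trans (cfcenter_sub _)) ?normG //=.
    apply/bigcapsP => j Pj; apply: subset_trans (comm_center_ker j).
    by rewrite commSg // sub1.
  move: Pi1; rewrite /= properE => /andP [_]; apply/negP/negPn.
  rewrite subsetI cfcenter_sub /=; apply/commG1P; exact/trivgP.
- move=> hK i j; apply/negPn/negP => /norP [nij nji].
  pose N := (cfker_group ('chi[G]_i)%R :&: cfker_group ('chi[G]_j)%R)%G.
  have nsNG : N <| G by rewrite normalI ?cfker_normal.
  have sNi : N \subset cfker ('chi_i)%R by apply: subsetIl.
  have sNj : N \subset cfker ('chi_j)%R by apply: subsetIr.
  have ltNG : N \proper G.
    rewrite properE normal_sub //=; apply: contra nji => sGN.
    apply: subset_trans (cfcenter_sub _) _.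
    exact: subset_trans sGN (subset_trans sNi (normal_sub (cfker_center_normal _))).
  have := hK N nsNG ltNG; apply/negP; rewrite negbK.
  pose i' := quo_Iirr N i; pose j' := quo_Iirr N j.
  have ei : mod_Iirr i' = i := quo_IirrK nsNG sNi.
  have ej : mod_Iirr j' = j := quo_IirrK nsNG sNj.
  have ni' : ~~ ('Z(('chi_i')%R)%CF \subset 'Z(('chi_j')%R)%CF).
    by rewrite -subZmod // ei ej.
  have nj' : ~~ ('Z(('chi_j')%R)%CF \subset 'Z(('chi_i')%R)%CF).
    by rewrite -subZmod // ei ej.
  have sZ : forall k : Iirr (G / N), 'Z(G / N) \subset 'Z(('chi_k)%R)%CF.
    by move=> k; rewrite -cap_cfcenter_irr; apply: bigcap_inf.
  rewrite /Ksub; case: ifP => abH.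
    have Zall : forall k : Iirr (G / N), 'Z(('chi_k)%R)%CF = G / N.
      move=> k; apply/eqP; rewrite eqEsubset cfcenter_sub /=.
      by rewrite -{1}(center_idP abH) sZ.
    by move: nj'; rewrite !Zall subxx.
  have Pi : 'Z(G / N) \proper 'Z(('chi_i')%R)%CF.
    by rewrite properE sZ /=; apply: contra ni' => s; apply: subset_trans s (sZ j').
  have Pj : 'Z(G / N) \proper 'Z(('chi_j')%R)%CF.
    by rewrite properE sZ /=; apply: contra nj' => s; apply: subset_trans s (sZ i').
  apply/eqP/trivgP.
  apply: subset_trans (subsetIr _ _) _.
  apply: subset_trans (_ : cfker ('chi_i')%R :&: cfker ('chi_j')%R \subset _).
    by rewrite subsetI; apply/andP; split; apply: bigcap_inf.
  rewrite !quo_IirrE // !cfker_quo // -quotientGI //.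
  by rewrite trivg_quotient.
Qed.
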